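(* Let $\Theta = \{l_1:\mathtt{qbit}, l_2:\mathtt{qbit}\}$ and $\theta = (l_1,l_2)$. Let $\mathscr{C}$ be a quantum circuit with holes such that $l:\mathtt{bit}, \Theta \rhd \mathscr{C} \rhd \Theta$ is derivable, and let $\mathscr{D}$ be the circuit with holes $\mathtt{if}\ l\ \mathtt{then}\ ([-];\{-\})\ \mathtt{else}\ (\{-\};[-])$. If $\mathscr{C} \approx \mathscr{D}$, then either the hole $[-]$ or the hole $\{-\}$ appears more than once in $\mathscr{C}$.
   Context: Circuits: fix an infinite set of labels; base types $\mathtt{bit},\mathtt{qbit}$; the operation set $\mathbb{Q}$ consists of $\mathtt{zero},\mathtt{one}:()\to(\mathtt{bit})$, $\mathtt{discard}:(\mathtt{bit})\to()$, $\mathtt{new}:(\mathtt{bit})\to(\mathtt{qbit})$, $\mathtt{meas}:(\mathtt{qbit})\to(\mathtt{bit})$, $H,S,T:(\mathtt{qbit})\to(\mathtt{qbit})$, $\mathrm{CNOT}:(\mathtt{qbit},\mathtt{qbit})\to(\mathtt{qbit},\mathtt{qbit})$. Circuits with holes are given by $\mathscr{C},\mathscr{D},\mathscr{E} ::= [-] \mid \{-\} \mid c^{\overline{l}}_{\overline{r}} \mid \mathscr{C};\mathscr{D} \mid \mathtt{if}\ l\ \mathtt{then}\ \mathscr{D}\ \mathtt{else}\ \mathscr{E}$ with $c\in\mathbb{Q}$ (gate $c$ applied to input wires $\overline{l}$ producing output wires $\overline{r}$). Environments are finite sets of (label : base type), each label at most once. Typing $\Gamma \rhd \mathscr{C} \rhd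 \Delta$ is derived by: $\Theta \rhd [-] \rhd \Theta$ and $\Theta \rhd \{-\} \rhd \Theta$ (with $\Theta$ as in the claim); for $c$ with input types $(B_1..B_n)$, output types $(B'_1..B'_m)$: $\Xi, l_1:B_1,\dots,l_n:B_n \rhd c^{(l_1..l_n)}_{(r_1..r_m)} \rhd \Xi, r_1:B'_1,\dots,r_m:B'_m$ for any environment $\Xi$; from $\Gamma\rhd\mathscr{C}\rhd\Psi$ and $\Psi\rhd\mathscr{D}\rhd\Delta$ infer $\Gamma\rhd\mathscr{C};\mathscr{D}\rhd\Delta$; from $\Gamma\rhd\mathscr{D}\rhd\Delta$ and $\Gamma\rhd\mathscr{E}\rhd\Delta$ infer $\Gamma,l:\mathtt{bit}\rhd \mathtt{if}\ l\ \mathtt{then}\ \mathscr{D}\ \mathtt{else}\ \mathscr{E}\rhd\Delta$. For circuits $C, D$ (possibly using additional gates), $\mathscr{C}(C,D)$ denotes the result of replacing $[-]$ by $C$ and $\{-\}$ by $D$. For any $4\times 4$ unitary matrix $U$, $U^\theta_\theta$ denotes the circuit applying $U$ as a gate to the wires $(l_1,l_2)$, with $\Theta \rhd U^\theta_\theta \rhd \Theta$. Semantics (category CPM): objects are tuples $(n_1,\dots,n_k)$ of positive integers with $V_{(n_1..n_k)}=\prod_i \mathbb{C}^{n_i\times n_i}$, morphisms are completely positive linear maps, tensor $(n_i)\otimes(m_j)=(n_im_j)_{i,j}$, unit $(1)$. $[\![\mathtt{bit}]\!]=(1,1)$, $[\![\mathtt{qbit}]\!]=(2)$, environments are interpreted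 as tensor products ordered by a fixed linear order on labels. A unitary gate $U$ is interpreted as $A\mapsto UAU^\dagger$; $[\![\mathtt{one}]\!](x)=(x,0)$, $[\![\mathtt{zero}]\!](x)=(0,x)$, $[\![\mathtt{new}]\!](x,0)=x|1\rangle\langle1|$, $[\![\mathtt{new}]\!](0,x)=x|0\rangle\langle0|$, $[\![\mathtt{meas}]\!]\begin{pmatrix}a&b\\c&d\end{pmatrix}=(a,d)$, $[\![\mathtt{discard}]\!](a,b)=a+b$. $[\![c^{\overline l}_{\overline r}]\!]$ is $\mathrm{id}_{[\![\Xi]\!]}\otimes[\![c]\!]$ up to symmetries, $[\![C;D]\!]=[\![D]\!]\circ[\![C]\!]$, and identifying $[\![\Gamma,l:\mathtt{bit}]\!]\cong[\![\Gamma]\!]\times[\![\Gamma]\!]$, $[\![\mathtt{if}\ l\ \mathtt{then}\ C\ \mathtt{else}\ D]\!](\vec A,\vec B)=[\![C]\!](\vec A)+[\![D]\!](\vec B)$. For circuits with holes $\Gamma\rhd\mathscr{C}\rhd\Delta$ and $\Gamma\rhd\mathscr{D}\rhd\Delta$, write $\mathscr{C}\approx\mathscr{D}$ if for all $4\times4$ unitary matrices $U,V$, $[\![\mathscr{C}(U^\theta_\theta,V^\theta_\theta)]\!] = [\![\mathscr{D}(U^\theta_\theta,V^\theta_\theta)]\!]$. *)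

(* Defs.v *)
From mathcomp Require Import all_boot all_algebra.
From mathcomp Require Import complex.
From mathcomp Require Import Rstruct.
Set Implicit Arguments. Unset Strict Implicit. Unset Printing Implicit Defensive.
Import GRing.Theory Num.Theory.
Local Open Scope ring_scope.

Definition C : numClosedFieldType := Rdefinitions.R[i].

(** Labels are natural numbers (an infinite set, linearly ordered). *)
Inductive btype := Bit | Qbit.

Inductive gate := Zero | One | Discard | New | Meas | Hg | Sg | Tg | CNOT.

Definition gin (g : gate) : seq btype :=
  match g with
  | Zero | One => [::]
  | Discard | New => [:: Bit]
  | Meas | Hg | Sg | Tg => [:: Qbit]
  | CNOT => [:: Qbit; Qbit]
  end.

Definition gout (g : gate) : seq btype :=
  match g with
  | Zero | One | Meas => [:: Bit]
  | Discard => [::]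
  | New | Hg | Sg | Tg => [:: Qbit]
  | CNOT => [:: Qbit; Qbit]
  end.

(** Circuits with holes.  [UGate U x y] is the additional gate applying the
    4x4 matrix U to the wires (x, y) (used to fill the holes). *)
Inductive circ :=
  | Hole1
  | Hole2
  | Gate of gate & seq nat & seq nat
  | Seq of circ & circ
  | If of nat & circ & circ
  | UGate of 'M[C]_4 & nat & nat.

Fixpoint fill (K A B : circ) : circ :=
  match K with
  | Hole1 => A
  | Hole2 => B
  | Seq K1 K2 => Seq (fill K1 A B) (fill K2 A B)
  | If l K1 K2 => If l (fill K1 A B) (fill K2 A B)
  | _ => K
  end.

Fixpoint count1 (K : circ) : nat :=
  match K with
  | Hole1 => 1
  | Seq K1 K2 | If _ K1 K2 => count1 K1 + count1 K2
  | _ => 0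
  end%N.

Fixpoint count2 (K : circ) : nat :=
  match K with
  | Hole2 => 1
  | Seq K1 K2 | If _ K1 K2 => count2 K1 + count2 K2
  | _ => 0
  end%N.

(** Environments: partial maps from labels to base types (finite ones are
    required where the typing rules introduce a fresh environment). *)
Definition env := nat -> option btype.

Definition env_finite (X : env) : Prop := exists n, forall x, (n <= x)%N -> X x = None.

Definition extend (X : env) (ls : seq nat) (ts : seq btype) : env :=
  fun x => if x \in ls then Some (nth Bit ts (index x ls)) else X x.

Definition empty_env : env := fun _ => None.

Definition Theta (l1 l2 : nat) : env := extend empty_env [:: l1; l2] [:: Qbit; Qbit].

Inductive typed (l1 l2 : nat) : env -> circ -> env -> Prop :=
  | ty_hole1 G D : G =1 Theta l1 l2 -> D =1 Theta l1 l2 -> typed l1 l2 G Hole1 D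
  | ty_hole2 G D : G =1 Theta l1 l2 -> D =1 Theta l1 l2 -> typed l1 l2 G Hole2 D
  | ty_gate g ins outs (X G D : env) :
      env_finite X -> uniq ins -> uniq outs ->
      size ins = size (gin g) -> size outs = size (gout g) ->
      (forall x, x \in ins -> X x = None) ->
      (forall x, x \in outs -> X x = None) ->
      G =1 extend X ins (gin g) -> D =1 extend X outs (gout g) ->
      typed l1 l2 G (Gate g ins outs) D
  | ty_seq G P D K1 K2 :
      typed l1 l2 G K1 P -> typed l1 l2 P K2 D -> typed l1 l2 G (Seq K1 K2) D
  | ty_if G G' D l K1 K2 :
      typed l1 l2 G' K1 D -> typed l1 l2 G' K2 D -> G' l = None ->
      G =1 extend G' [:: l] [:: Bit] -> typed l1 l2 G (If l K1 K2) D.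

(** An element of V_[[G]] (a tuple of 2^#bits matrices of size
    2^#qbits) is represented by its coordinates:
      f c p k  = entry (p, k) of the block indexed by the classical valuation c,
    where c gives the values of the bit wires (true = first component, i.e. the
    value produced by [one]) and p, k : nat -> bool give the row/column
    computational-basis indices of the qbit wires (true = |1>).
    Such an f represents an element of V_[[G]] when it only depends on the
    coordinates of the labels of G (see [supported]). *)
Definition st := (nat -> bool) -> (nat -> bool) -> (nat -> bool) -> C.

Definition upd (v : nat -> bool) (x : nat) (b : bool) : nat -> bool :=
  fun y => if y == x then b else v y.

Definition supported (G : env) (f : st) : Prop :=
  forall c c' p p' k k',
    (forall x, G x = Some Bit -> c x = c' x) ->
    (forall x, G x = Some Qbit -> p x = p' x /\ k x = k' x) ->
    f c p k = f c' p' k'.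

(** A -> u A u^dagger, one-qubit gate from wire l to wire r. *)
Definition app1 (u : bool -> bool -> C) (l r : nat) (f : st) : st :=
  fun c p k => \sum_(a : bool) \sum_(b : bool)
    u (p r) a * f c (upd p l a) (upd k l b) * (u (k r) b)^*.

(** A -> u A u^dagger, two-qubit gate from wires (l1,l2) to wires (r1,r2);
    the first wire is the first tensor factor. *)
Definition app2 (u : bool * bool -> bool * bool -> C) (l1 l2 r1 r2 : nat)
    (f : st) : st :=
  fun c p k => \sum_(a : bool * bool) \sum_(b : bool * bool)
    u (p r1, p r2) a * f c (upd (upd p l1 a.1) l2 a.2) (upd (upd k l1 b.1) l2 b.2)
      * (u (k r1, k r2) b)^*.

Definition sqrt2 : C := sqrtC 2.

Definition Hmat (a b : bool) : C := (if a && b then -1 else 1) / sqrt2.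
Definition Smat (a b : bool) : C := if a == b then (if a then 'i else 1) else 0.
Definition Tmat (a b : bool) : C :=
  if a == b then (if a then (1 + 'i) / sqrt2 else 1) else 0.
(* CNOT, control = first wire *)
Definition CNOTmat (a b : bool * bool) : C :=
  ((a.1 == b.1) && (a.2 == (b.2 (+) b.1)))%:R.

Definition sem_gate (g : gate) (ins outs : seq nat) (f : st) : st :=
  let l1 := nth 0%N ins 0 in let l2 := nth 0%N ins 1 in
  let r1 := nth 0%N outs 0 in let r2 := nth 0%N outs 1 in
  match g with
  | Zero => fun c p k => if c r1 then 0 else f c p k
  | One => fun c p k => if c r1 then f c p k else 0
  | Discard => fun c p k => f (upd c l1 true) p k + f (upd c l1 false) p k
  | New => fun c p k => if p r1 == k r1 then f (upd c l1 (p r1)) p k else 0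
  | Meas => fun c p k => f c (upd p l1 (c r1)) (upd k l1 (c r1))
  | Hg => app1 Hmat l1 r1 f
  | Sg => app1 Smat l1 r1 f
  | Tg => app1 Tmat l1 r1 f
  | CNOT => app2 CNOTmat l1 l2 r1 r2 f
  end.

(** Index of the basis vector |a1 a2> (a1 most significant). *)
Definition idx4 (a : bool * bool) : 'I_4 := inord ((nat_of_bool a.1).*2 + a.2)%N.

Fixpoint sem (K : circ) (f : st) : st :=
  match K with
  | Hole1 | Hole2 => f
  | Gate g ins outs => sem_gate g ins outs f
  | Seq K1 K2 => sem K2 (sem K1 f)
  | If l K1 K2 => fun c p k =>
      sem K1 (fun c' p' k' => f (upd c' l true) p' k') c p k
      + sem K2 (fun c' p' k' => f (upd c' l false) p' k') c p k
  | UGate U x y => app2 (fun a b => U (idx4 a) (idx4 b)) x y x y f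
  end.

Definition unitary (U : 'M[C]_4) : Prop := U *m (map_mx Num.conj U)^T = 1%:M.

Definition approx (l1 l2 : nat) (G : env) (K1 K2 : circ) : Prop :=
  forall U V : 'M[C]_4, unitary U -> unitary V ->
  forall f, supported G f -> forall c p k,
    sem (fill K1 (UGate U l1 l2) (UGate V l1 l2)) f c p k =
    sem (fill K2 (UGate U l1 l2) (UGate V l1 l2)) f c p k.

Definition Dswitch (l : nat) : circ := If l (Seq Hole1 Hole2) (Seq Hole2 Hole1).

(* Main.v *)
Require Import Defs.
From mathcomp Require Import all_boot all_algebra.
From mathcomp Require Import complex.
From mathcomp Require Import Rstruct.
From mathcomp Require Import ring zify.
From Stdlib Require Import FunctionalExtensionality Classical_Prop.
Set Implicit Arguments. Unset Strict Implicit. Unset Printing Implicit Defensive.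
Import GRing.Theory Num.Theory.
Local Open Scope ring_scope.
Fixpoint swapK (K : circ) : circ :=
  match K with
  | Hole1 => Hole2 | Hole2 => Hole1
  | Seq K1 K2 => Seq (swapK K1) (swapK K2)
  | If l K1 K2 => If l (swapK K1) (swapK K2)
  | K => K end.

Lemma fill_swap K A B : fill (swapK K) A B = fill K B A.
Proof. by elim: K => //= [K1 IH1 K2 IH2|x K1 IH1 K2 IH2]; rewrite IH1 IH2. Qed.
Lemma count1_swap K : count1 (swapK K) = count2 K.
Proof. by elim: K => //= [K1 IH1 K2 IH2|x K1 IH1 K2 IH2]; rewrite IH1 IH2. Qed.
Lemma count2_swap K : count2 (swapK K) = count1 K.
Proof. by elim: K => //= [K1 IH1 K2 IH2|x K1 IH1 K2 IH2]; rewrite IH1 IH2. Qed.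
Lemma typed_swap l1 l2 G K D : typed l1 l2 G K D -> typed l1 l2 G (swapK K) D.
Proof.
elim=> /=.
- by move=> *; apply: ty_hole2.
- by move=> *; apply: ty_hole1.
- by move=> *; econstructor; eauto.
- by move=> *; econstructor; eauto.
- by move=> *; econstructor; eauto.
Qed.
Lemma fill_indep1 K A A' B : count1 K = 0%N -> fill K A B = fill K A' B.
Proof.
elim: K => //= [K1 IH1 K2 IH2|x K1 IH1 K2 IH2] /eqP; rewrite addn_eq0 => /andP[/eqP h1 /eqP h2];
 by rewrite IH1 // IH2.
Qed.

Definition herm (f : st) := forall c p k, f c k p = (f c p k)^*.

Lemma herm_app2 u x y r1 r2 f : herm f -> herm (app2 u x y r1 r2 f).
Proof.
move=> hf c p k; rewrite /app2 rmorph_sum exchange_big; apply: eq_bigr => a _.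
rewrite rmorph_sum; apply: eq_bigr => b _.
rewrite !rmorphM /= (hf c (upd (upd k x b.1) y b.2)). rewrite !(@conjCK C). ring.
Qed.

Lemma herm_app1 u x r f : herm f -> herm (app1 u x r f).
Proof.
move=> hf c p k; rewrite /app1 rmorph_sum exchange_big; apply: eq_bigr => a _.
rewrite rmorph_sum; apply: eq_bigr => b _.
rewrite !rmorphM /= (hf c (upd k x b)) !(@conjCK C); ring.
Qed.

Lemma herm_sem K f : herm f -> herm (sem K f).
Proof.
elim: K f => //=.
- move=> g ins outs f hf; case: g => /= c p k; try (by apply: herm_app1);
    try (by apply: herm_app2).
  + by case: (c _); rewrite ?conjC0 // hf ?(@conjCK C).
  + by case: (c _); rewrite ?conjC0 // hf ?(@conjCK C).
  + by rewrite rmorphD (hf (upd c _ true)) (hf (upd c _ false)).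
  + rewrite eq_sym; case: eqP => [->|_]; last by rewrite conjC0.
    by rewrite hf ?(@conjCK C).
  + by rewrite hf ?(@conjCK C).
- by move=> K1 IH1 K2 IH2 f hf; apply: IH2; apply: IH1.
- move=> x K1 IH1 K2 IH2 f hf c p k; rewrite rmorphD.
  by rewrite (IH1 _ (fun c p k => hf _ p k)) (IH2 _ (fun c p k => hf _ p k)).
- by move=> U x y f hf; apply: herm_app2.
Qed.

Lemma extend0 X x : extend X [::] [::] x = X x.
Proof. by []. Qed.
Lemma extend1 X a t x : extend X [:: a] [:: t] x = if x == a then Some t else X x.
Proof. by rewrite /extend inE; case: (x =P a) => [->|] //=; rewrite eqxx. Qed.
Lemma extend2 X a b t x :
  extend X [:: a; b] [:: t; t] x = if (x == a) || (x == b) then Some t else X x.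
Proof.
rewrite /extend !inE; case: (x =P a) => [->|ne] /=; first by rewrite eqxx.
by case: (x =P b) => [->|] //=; rewrite eqxx; case: (_ == _).
Qed.
Lemma ThetaE l1 l2 x : Theta l1 l2 x = if (x == l1) || (x == l2) then Some Qbit else None.
Proof. by rewrite /Theta extend2. Qed.

Lemma upd_eq (v : nat -> bool) x b : upd v x b x = b.
Proof. by rewrite /upd eqxx. Qed.
Lemma upd_neq (v : nat -> bool) x y b : y != x -> upd v x b y = v y.
Proof. by rewrite /upd => /negbTE ->. Qed.

Lemma supp_app2 u a a2 r r2 (X G D : env) f :
  (forall x, G x = if (x == a) || (x == a2) then Some Qbit else X x) ->
  (forall x, D x = if (x == r) || (x == r2) then Some Qbit else X x) ->
  X r = None -> X r2 = None ->
  supported G f -> supported D (app2 u a a2 r r2 f).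
Proof.
move=> hG hD hXr hXr2 hf c c' p p' k k' hc hq.
have hcX x : X x = Some Bit -> c x = c' x.
  move=> hx; apply: hc; rewrite hD; case: ifP => [/orP[]/eqP e|_] //.
  - by rewrite e hXr in hx.
  - by rewrite e hXr2 in hx.
have hqX x : X x = Some Qbit -> p x = p' x /\ k x = k' x.
  move=> hx; apply: hq; rewrite hD; case: ifP => [/orP[]/eqP e|_] //.
have [pr kr] : p r = p' r /\ k r = k' r by apply: hq; rewrite hD eqxx.
have [pr2 kr2] : p r2 = p' r2 /\ k r2 = k' r2 by apply: hq; rewrite hD eqxx orbT.
rewrite /app2 pr kr pr2 kr2; apply: eq_bigr => i _; apply: eq_bigr => j _.
congr (_ * _ * _); apply: hf => x; rewrite hG.
- by case: ifP => // _; apply: hcX.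
- rewrite /upd; case: (x =P a2) => [_|n2]; first by [].
  by case: (x =P a) => [_|n1] //=; apply: hqX.
Qed.

Lemma supp_app1 u a r (X G D : env) f :
  (forall x, G x = if x == a then Some Qbit else X x) ->
  (forall x, D x = if x == r then Some Qbit else X x) ->
  X r = None -> supported G f -> supported D (app1 u a r f).
Proof.
move=> hG hD hXr hf c c' p p' k k' hc hq.
have hcX x : X x = Some Bit -> c x = c' x.
  move=> hx; apply: hc; rewrite hD; case: ifP => [/eqP e|_] //.
  by rewrite e hXr in hx.
have hqX x : X x = Some Qbit -> p x = p' x /\ k x = k' x.
  move=> hx; apply: hq; rewrite hD; case: ifP => [/eqP e|_] //.
have [pr kr] : p r = p' r /\ k r = k' r by apply: hq; rewrite hD eqxx.
rewrite /app1 pr kr; apply: eq_bigr => i _; apply: eq_bigr => j _.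
congr (_ * _ * _); apply: hf => x; rewrite hG.
- by case: ifP => // _; apply: hcX.
- rewrite /upd; case: (x =P a) => [_|n1] //; apply: hqX.
Qed.

Lemma agree_bitX (D X : env) outs ts (c c' : nat -> bool) :
  D =1 extend X outs ts -> (forall x, x \in outs -> X x = None) ->
  (forall x, D x = Some Bit -> c x = c' x) -> forall x, X x = Some Bit -> c x = c' x.
Proof.
move=> hD hout hc x hx; apply: hc; rewrite (hD x) /extend.
by case: ifP => [/hout|//]; rewrite hx.
Qed.
Lemma agree_qX (D X : env) outs ts (p p' k k' : nat -> bool) :
  D =1 extend X outs ts -> (forall x, x \in outs -> X x = None) ->
  (forall x, D x = Some Qbit -> p x = p' x /\ k x = k' x) ->
  forall x, X x = Some Qbit -> p x = p' x /\ k x = k' x.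
Proof.
move=> hD hout hc x hx; apply: hc; rewrite (hD x) /extend.
by case: ifP => [/hout|//]; rewrite hx.
Qed.

Lemma supp_gate g ins outs (X G D : env) f :
  uniq ins -> size ins = size (gin g) -> size outs = size (gout g) ->
  (forall x, x \in ins -> X x = None) -> (forall x, x \in outs -> X x = None) ->
  G =1 extend X ins (gin g) -> D =1 extend X outs (gout g) ->
  supported G f -> supported D (sem_gate g ins outs f).
Proof.
move=> uin hsi hso hin hout hG hD hf.
case: g hsi hso hG hD => /=;
  case: ins uin hin => [|a [|a2 [|? ?]]] //= uin hin _;
  case: outs hout => [|r [|r2 [|? ?]]] //= hout _ hG hD;
  try (apply: (@supp_app1 _ _ _ X G) => //;
    [ by move=> x; rewrite hG extend1 | by move=> x; rewrite hD extend1
    | by apply: hout; rewrite inE eqxx ]);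
  try (apply: (@supp_app2 _ _ _ _ _ X G) => //;
    [ by move=> x; rewrite hG extend2 | by move=> x; rewrite hD extend2
    | by apply: hout; rewrite !inE eqxx | by apply: hout; rewrite !inE eqxx orbT ]);
  move=> c c' p p' k k' hc hq;
  have hcX := agree_bitX hD hout hc; have hqX := agree_qX hD hout hq.
-
  have cr : c r = c' r by apply: hc; rewrite hD extend1 eqxx.
  rewrite cr; case: (c' r) => //; apply: hf => x; rewrite hG extend0; by [apply: hcX|apply: hqX].
-
  have cr : c r = c' r by apply: hc; rewrite hD extend1 eqxx.
  rewrite cr; case: (c' r) => //; apply: hf => x; rewrite hG extend0; by [apply: hcX|apply: hqX].
-
  congr (_ + _); apply: hf => x; rewrite hG extend1 /upd;
    (case: (x =P a) => [_|ne] //=; by [apply: hcX | apply: hqX]).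
-
  have [pr kr] : p r = p' r /\ k r = k' r by apply: hq; rewrite hD extend1 eqxx.
  rewrite pr kr; case: ifP => // _; apply: hf => x; rewrite hG extend1 /upd;
    (case: (x =P a) => [_|ne] //=; by [apply: hcX | apply: hqX]).
-
  have cr : c r = c' r by apply: hc; rewrite hD extend1 eqxx.
  rewrite cr; apply: hf => x; rewrite hG extend1 /upd;
    (case: (x =P a) => [_|ne] //=; by [apply: hcX | apply: hqX]).
Qed.

Lemma supp_sem l1 l2 G K D U V f :
  typed l1 l2 G K D -> supported G f ->
  supported D (sem (fill K (UGate U l1 l2) (UGate V l1 l2)) f).
Proof.
move=> ty; elim: ty f => /=.
- move=> G0 D0 hG hD f hf; apply: (@supp_app2 _ _ _ _ _ empty_env G0) => //.
  + by move=> x; rewrite hG ThetaE.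
  + by move=> x; rewrite hD ThetaE.
- move=> G0 D0 hG hD f hf; apply: (@supp_app2 _ _ _ _ _ empty_env G0) => //.
  + by move=> x; rewrite hG ThetaE.
  + by move=> x; rewrite hD ThetaE.
- move=> g ins outs X G0 D0 _ uin _ hsi hso hin hout hG hD f hf.
  exact: (supp_gate uin hsi hso hin hout hG hD hf).
- by move=> G0 P D0 K1 K2 _ IH1 _ IH2 f hf; apply: IH2; apply: IH1.
- move=> G0 G' D0 x K1 K2 _ IH1 _ IH2 hx hG f hf c c' p p' k k' hc hq.
  have hb b : supported G' (fun c p k => f (upd c x b) p k).
    move=> d d' q q' m m' hd hm; apply: hf => y; rewrite hG extend1 /upd.
    - by case: (y =P x) => // _; apply: hd.
    - by case: (y =P x) => // _; apply: hm.
  by congr (_ + _); [apply: (IH1 _ (hb true)) | apply: (IH2 _ (hb false))].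
Qed.

Lemma fill_indep2 K A B B' : count2 K = 0%N -> fill K A B = fill K A B'.
Proof.
elim: K => //= [K1 IH1 K2 IH2|x K1 IH1 K2 IH2] /eqP; rewrite addn_eq0 => /andP[/eqP h1 /eqP h2];
 by rewrite IH1 // IH2.
Qed.

Lemma supp_upd (G G' : env) x b f : G =1 extend G' [:: x] [:: Bit] ->
  supported G f -> supported G' (fun c p k => f (upd c x b) p k).
Proof.
move=> hG hf d d' q q' m m' hd hm; apply: hf => y; rewrite hG extend1 /upd.
- by case: (y =P x) => // _; apply: hd.
- by case: (y =P x) => // _; apply: hm.
Qed.

Definition Prec l1 l2 (G : env) (K : circ) : Prop :=
  forall f, supported G f -> herm f ->
  exists s, supported (Theta l1 l2) s /\ herm s /\
  forall U1 U2 : 'M[C]_4, sem (UGate U1 l1 l2) s = sem (UGate U2 l1 l2) s ->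
  forall V, sem (fill K (UGate U1 l1 l2) (UGate V l1 l2)) f =
            sem (fill K (UGate U2 l1 l2) (UGate V l1 l2)) f.

Lemma P_closed1 l1 l2 G K : count1 K = 0%N -> Prec l1 l2 G K.
Proof.
move=> h f _ _; exists (fun _ _ _ => 0); split; first by [].
split; first by move=> *; rewrite conjC0.
by move=> U1 U2 _ V; rewrite (fill_indep1 _ (UGate U2 l1 l2) _ h).
Qed.

Lemma P_hole1 l1 l2 G : G =1 Theta l1 l2 -> Prec l1 l2 G Hole1.
Proof.
move=> hG f hf hh; exists f; split; last by split.
by move=> c c' p p' k k' hc hq; apply: hf => x; rewrite hG; [apply: hc|apply: hq].
Qed.

Lemma P_seqL l1 l2 G K1 K2 : Prec l1 l2 G K1 -> count1 K2 = 0%N -> Prec l1 l2 G (Seq K1 K2).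
Proof.
move=> P h f hf hh; have [s [ss [hs E]]] := P f hf hh; exists s; do 2!split => //.
move=> U1 U2 e V /=; rewrite (E U1 U2 e V).
by rewrite (fill_indep1 _ (UGate U2 l1 l2) _ h).
Qed.

Lemma P_seqR l1 l2 G P K1 K2 : typed l1 l2 G K1 P -> count1 K1 = 0%N -> count2 K1 = 0%N ->
  Prec l1 l2 P K2 -> Prec l1 l2 G (Seq K1 K2).
Proof.
move=> ty h1 h2 PK f hf hh.
pose g := sem (fill K1 (UGate 0 l1 l2) (UGate 0 l1 l2)) f.
have sg : supported P g by apply: supp_sem ty hf.
have hg : herm g by apply: herm_sem.
have [s [ss [hs E]]] := PK g sg hg; exists s; do 2!split => //.
move=> U1 U2 e V /=.
have eK U : fill K1 (UGate U l1 l2) (UGate V l1 l2) = fill K1 (UGate 0 l1 l2) (UGate 0 l1 l2).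
  by rewrite (fill_indep1 _ (UGate 0 l1 l2) _ h1) (fill_indep2 _ _ (UGate 0 l1 l2) h2).
by rewrite !eK; apply: E.
Qed.

Lemma P_ifL l1 l2 G G' x K1 K2 : G =1 extend G' [:: x] [:: Bit] ->
  Prec l1 l2 G' K1 -> count1 K2 = 0%N -> Prec l1 l2 G (If x K1 K2).
Proof.
move=> hG P h f hf hh.
have [s [ss [hs E]]] := P _ (supp_upd true hG hf) (fun c p k => hh _ p k).
exists s; do 2!split => //.
move=> U1 U2 e V /=; rewrite (E U1 U2 e V).
by rewrite (fill_indep1 _ (UGate U2 l1 l2) _ h).
Qed.

Lemma P_ifR l1 l2 G G' x K1 K2 : G =1 extend G' [:: x] [:: Bit] ->
  count1 K1 = 0%N -> Prec l1 l2 G' K2 -> Prec l1 l2 G (If x K1 K2).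
Proof.
move=> hG h P f hf hh.
have [s [ss [hs E]]] := P _ (supp_upd false hG hf) (fun c p k => hh _ p k).
exists s; do 2!split => //.
move=> U1 U2 e V /=; rewrite (E U1 U2 e V).
by rewrite (fill_indep1 _ (UGate U2 l1 l2) _ h).
Qed.

Lemma LemA l1 l2 G K D : typed l1 l2 G K D -> (count1 K <= 1)%N -> count2 K = 0%N ->
  Prec l1 l2 G K.
Proof.
elim=> {G K D} /=.
- by move=> G D hG _ _ _; apply: P_hole1.
- by [].
- by move=> *; apply: P_closed1.
- move=> G P D K1 K2 ty1 IH1 ty2 IH2 h1 h2.
  have [e|e] : count1 K1 = 0%N \/ count1 K2 = 0%N by lia.
  + by apply: (P_seqR ty1) => //; [lia | apply: IH2; lia].
  + by apply: P_seqL => //; apply: IH1; lia.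
- move=> G G' D x K1 K2 ty1 IH1 ty2 IH2 hx hG h1 h2.
  have [e|e] : count1 K2 = 0%N \/ count1 K1 = 0%N by lia.
  + by apply: (P_ifL hG) => //; apply: IH1; lia.
  + by apply: (P_ifR hG) => //; apply: IH2; lia.
Qed.

Lemma LemC l1 l2 G K D : typed l1 l2 G K D -> (count1 K <= 1)%N -> (count2 K <= 1)%N ->
  Prec l1 l2 G K \/ Prec l1 l2 G (swapK K).
Proof.
elim=> {G K D} /=.
- by move=> G D hG _ _ _; left; apply: P_hole1.
- by move=> G D hG _ _ _; right; apply: P_hole1.
- by move=> *; left; apply: P_closed1.
- move=> G P D K1 K2 ty1 IH1 ty2 IH2 h1 h2.
  have s11 := count1_swap K1; have s12 := count1_swap K2.
  have s21 := count2_swap K1; have s22 := count2_swap K2.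
  case: (count1 K2 =P 0%N) => e12.
  + case: (count2 K2 =P 0%N) => e22.
    * have [P1|P1] := IH1 ltac:(lia) ltac:(lia).
      - by left; apply: P_seqL.
      - by right; apply: P_seqL => //; lia.
    * left; apply: P_seqL => //; apply: (LemA ty1); lia.
  + case: (count2 K1 =P 0%N) => e21.
    * have [P2|P2] := IH2 ltac:(lia) ltac:(lia).
      - by left; apply: (P_seqR ty1) => //; lia.
      - right; apply: (P_seqR (typed_swap ty1)) => //; lia.
    * right; apply: P_seqL; last by lia.
      apply: (LemA (typed_swap ty1)); lia.
- move=> G G' D x K1 K2 ty1 IH1 ty2 IH2 hx hG h1 h2.
  have s11 := count1_swap K1; have s12 := count1_swap K2.
  have s21 := count2_swap K1; have s22 := count2_swap K2.
  case: (count1 K2 =P 0%N) => e12.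
  + case: (count2 K2 =P 0%N) => e22.
    * have [P1|P1] := IH1 ltac:(lia) ltac:(lia).
      - by left; apply: (P_ifL hG).
      - by right; apply: (P_ifL hG) => //; lia.
    * left; apply: (P_ifL hG) => //; apply: (LemA ty1); lia.
  + case: (count2 K1 =P 0%N) => e21.
    * have [P2|P2] := IH2 ltac:(lia) ltac:(lia).
      - by left; apply: (P_ifR hG) => //; lia.
      - right; apply: (P_ifR hG) => //; lia.
    * right; apply: (P_ifL hG); last by lia.
      apply: (LemA (typed_swap ty1)); lia.
Qed.

Notation adj A := ((map_mx Num.conj A)^T).

Definition ix l1 l2 (p : nat -> bool) : 'I_4 := idx4 (p l1, p l2).
Definition stm l1 l2 (M : 'M[C]_4) : st := fun c p k => M (ix l1 l2 p) (ix l1 l2 k).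
Definition bits4 (i : 'I_4) : bool * bool := ((2 <= i)%N, odd i).
Definition pv l1 l2 (a : bool * bool) : nat -> bool :=
  fun x => if x == l1 then a.1 else if x == l2 then a.2 else false.

Lemma idx4K a : bits4 (idx4 a) = a.
Proof. by case: a => [[] []]; rewrite /bits4 /idx4 /= inordK. Qed.
Lemma bits4K i : idx4 (bits4 i) = i.
Proof.
apply/val_inj; case: i => [[|[|[|[|m]]]] Hm] //=; rewrite /idx4 /= inordK //.
Qed.

Lemma sum44 (F : 'I_4 -> 'I_4 -> C) :
  \sum_(a : bool * bool) \sum_(b : bool * bool) F (idx4 a) (idx4 b) = \sum_(i < 4) \sum_(j < 4) F i j.
Proof.
have bij : bijective idx4 by exists bits4; [exact: idx4K | exact: bits4K].
rewrite (reindex idx4) /=; last by apply: onW_bij.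
apply: eq_bigr => a _; rewrite (reindex idx4) //=; by apply: onW_bij.
Qed.

Lemma ix_upd l1 l2 p (a : bool * bool) : l1 != l2 -> ix l1 l2 (upd (upd p l1 a.1) l2 a.2) = idx4 a.
Proof.
move=> ne; rewrite /ix /upd !eqxx (negbTE ne).
by case: a.
Qed.

Lemma ix_pv l1 l2 a : l1 != l2 -> ix l1 l2 (pv l1 l2 a) = idx4 a.
Proof.
move=> ne; rewrite /ix /pv eqxx eq_sym (negbTE ne) eqxx.
by case: a.
Qed.

Lemma app2_stm l1 l2 U M : l1 != l2 ->
  sem (UGate U l1 l2) (stm l1 l2 M) = stm l1 l2 (U *m M *m adj U).
Proof.
move=> ne; apply: functional_extensionality => c; apply: functional_extensionality => p;
  apply: functional_extensionality => k.
rewrite /= /app2 /stm.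
under eq_bigr => a _ do under eq_bigr => b _ do rewrite !ix_upd //.
rewrite (sum44 (fun i j => U (ix l1 l2 p) i * M i j * (U (ix l1 l2 k) j)^*)).
rewrite !mxE; symmetry; under eq_bigr => j _ do rewrite !mxE big_distrl.
rewrite exchange_big; apply: eq_bigr => j _; apply: eq_bigr => i _.
by rewrite ?mxE.
Qed.

Lemma stm_supp l1 l2 s : l1 != l2 -> supported (Theta l1 l2) s ->
  s = stm l1 l2 (\matrix_(i, j) s (fun _ => false) (pv l1 l2 (bits4 i)) (pv l1 l2 (bits4 j))).
Proof.
move=> ne hs; apply: functional_extensionality => c; apply: functional_extensionality => p;
  apply: functional_extensionality => k.
rewrite /stm mxE; apply: hs => x; rewrite ThetaE.
- by case: ifP.
- rewrite /ix !idx4K /pv /=; case: (x =P l1) => [->|n1] //=.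
  by case: (x =P l2) => [->|n2] //=.
Qed.

Lemma stm_inj l1 l2 M M' : l1 != l2 -> stm l1 l2 M = stm l1 l2 M' -> M = M'.
Proof.
move=> ne e; apply/matrixP => i j.
have := congr1 (fun f => f (fun _ => false) (pv l1 l2 (bits4 i)) (pv l1 l2 (bits4 j))) e.
by rewrite /stm /= !ix_pv // !bits4K.
Qed.

Lemma herm_adj l1 l2 s : herm s ->
  let M := \matrix_(i, j) s (fun _ => false) (pv l1 l2 (bits4 i)) (pv l1 l2 (bits4 j)) in
  adj M = M.
Proof.
move=> hs M; apply/matrixP => i j; rewrite !mxE.
by rewrite -hs.
Qed.

Lemma adjM m n r (A : 'M[C]_(m, n)) (B : 'M[C]_(n, r)) : adj (A *m B) = adj B *m adj A.
Proof. by rewrite map_mxM trmx_mul. Qed.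
Lemma adjK m n (A : 'M[C]_(m, n)) : adj (adj A) = A.
Proof. by apply/matrixP => i j; rewrite !mxE conjCK. Qed.
Lemma adjZ m n a (A : 'M[C]_(m, n)) : adj (a *: A) = a^* *: adj A.
Proof. by apply/matrixP => i j; rewrite !mxE rmorphM. Qed.
Lemma adj1 : adj (1%:M : 'M[C]_4) = 1%:M.
Proof. by apply/matrixP => i j; rewrite !mxE eq_sym; case: (_ == _); rewrite ?conjC0 ?conjC1. Qed.
Lemma unitary1 : unitary (1%:M : 'M[C]_4).
Proof. by rewrite /unitary adj1 mulmx1. Qed.

Definition q35 : C := 3%:R / 5%:R.
Definition q45 : C := 4%:R / 5%:R.
Lemma conj_q35 : q35^* = q35.
Proof. by rewrite /q35 fmorph_div !rmorph_nat. Qed.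
Lemma conj_q45 : q45^* = q45.
Proof. by rewrite /q45 fmorph_div !rmorph_nat. Qed.

Definition vj (j : 'I_4) : 'M[C]_4 := \matrix_(a, b)
  if a == ord0 then (if b == ord0 then q35 else if b == j then - q45 else 0)
  else if a == j then (if b == ord0 then q45 else if b == j then q35 else 0)
  else (a == b)%:R.

Lemma vj_unitary j : j != ord0 -> unitary (vj j).
Proof.
move=> nj; rewrite /unitary; apply/matrixP => a b; rewrite !mxE.
rewrite !big_ord_recl big_ord0 !mxE.
case: j nj => [[|[|[|[|?]]]] Hj] // _;
case: a => [[|[|[|[|?]]]] Ha] //; case: b => [[|[|[|[|?]]]] Hb] //=.
all: rewrite /= ?conj_q35 ?conj_q45 ?rmorphN ?conjC0 ?conjC1 /q35 /q45.
all: try field.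
all: done.
Qed.

Lemma herm_unit (M : 'M[C]_4) c : adj M = M -> c^* != c -> (M + c%:M) \in unitmx.
Proof.
move=> hM hc; rewrite unitmxE unitfE; apply/negP => /det0P [v nz e].
have e1 : v *m M = - c *: v.
  by apply/eqP; rewrite scaleNr -addr_eq0 -mul_mx_scalar -mulmxDr e.
pose N := v *m adj v.
have e3 : adj (v *m M *m adj v) = v *m M *m adj v.
  by rewrite !adjM adjK hM mulmxA.
rewrite e1 -scalemxAl adjZ adjM adjK -/N in e3.
have /eqP : ((- c)^* - (- c)) *: N = 0 by rewrite scalerBl e3 subrr.
rewrite scaler_eq0 subr_eq0 rmorphN eqr_opp (negbTE hc) /= => /eqP N0.
have : N ord0 ord0 == 0 by rewrite N0 mxE.
rewrite mxE psumr_eq0 => [/allP h|i _]; last by rewrite !mxE mul_conjC_ge0.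
apply/negP: nz; rewrite negbK; apply/eqP/matrixP => i j; rewrite (ord1 i) mxE.
by have := h j (mem_index_enum j); rewrite /= !mxE mul_conjC_eq0 => /eqP.

Qed.

Lemma comm_inv (A B : 'M[C]_4) : A \in unitmx -> A *m B = B *m A ->
  invmx A *m B = B *m invmx A.
Proof.
move=> uA e.
rewrite -[LHS]mulmx1 -(mulmxV uA) !mulmxA -[invmx A *m B *m A]mulmxA -e.
by rewrite !mulmxA mulVmx // mul1mx.
Qed.

Lemma adj_scalar (a : C) : adj (a%:M : 'M[C]_4) = (a^*)%:M.
Proof. by apply/matrixP => i j; rewrite !mxE eq_sym; case: (_ == _); rewrite ?mulr1n ?mulr0n ?conjC0. Qed.
Lemma adjD (A B : 'M[C]_4) : adj (A + B) = adj A + adj B.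
Proof. by apply/matrixP => i j; rewrite !mxE rmorphD. Qed.

Lemma neq_i : ('i : C) != - 'i.
Proof. by rewrite -subr_eq0 opprK -mulr2n mulrn_eq0 negb_or neq0Ci. Qed.

Lemma comm_shift (M : 'M[C]_4) a b : (M + a%:M) *m (M + b%:M) = (M + b%:M) *m (M + a%:M).
Proof.
by rewrite !mulmxDl !mulmxDr !mul_scalar_mx !mul_mx_scalar !scale_scalar_mx addrACA [b * a]mulrC.
Qed.

Lemma cayley (M : 'M[C]_4) : adj M = M -> exists W, unitary W /\ W *m M = M *m W /\
   W *m (M + 'i%:M) = M + (- 'i)%:M.
Proof.
move=> hM; set P := M + 'i%:M; set Q := M + (- 'i)%:M.
have hP : P \in unitmx by apply: herm_unit => //; rewrite conjCi eq_sym neq_i.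
have ci : (- 'i : C)^* != - 'i by rewrite -conjCi conjCK conjCi neq_i.
have hQ : Q \in unitmx by apply: (herm_unit hM ci).
have cPM : P *m M = M *m P by rewrite mulmxDl mulmxDr mul_scalar_mx mul_mx_scalar.
have cQM : Q *m M = M *m Q by rewrite mulmxDl mulmxDr mul_scalar_mx mul_mx_scalar.
have cQP : Q *m P = P *m Q by apply: comm_shift.
have aP : adj P = Q by rewrite adjD hM adj_scalar conjCi.
have aQ : adj Q = P by rewrite adjD hM adj_scalar -conjCi conjCK.
exists (Q *m invmx P); split; last split.
- rewrite /unitary -/(adj _) adjM.
  have -> : adj (invmx P) = invmx Q by rewrite map_invmx trmx_inv aP.
  by rewrite aQ (comm_inv hQ cQP) mulmxA mulmxKV // mulmxV.
- by rewrite -mulmxA (comm_inv hP cPM) !mulmxA cQM.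
- by rewrite mulmxKV.
Qed.

Definition E00 : 'M[C]_4 := delta_mx ord0 ord0.

Lemma XE (X : 'M[C]_4) a j : (X *m E00) a j = X a ord0 * (j == ord0)%:R.
Proof.
rewrite mxE (bigD1 ord0) //= big1 => [|m nm]; first by rewrite !mxE eqxx addr0.
by rewrite !mxE (negbTE nm) mulr0.
Qed.

Lemma rank1E (X : 'M[C]_4) a b : (X *m E00 *m adj X) a b = X a ord0 * (X b ord0)^*.
Proof.
rewrite mxE (bigD1 ord0) //= big1 => [|m nm]; first by rewrite XE !mxE eqxx mulr1 addr0.
by rewrite XE (negbTE nm) mulr0 mul0r.
Qed.

Lemma vj_col0 j m : vj j m ord0 = if m == ord0 then q35 else if m == j then q45 else 0.
Proof.
rewrite mxE eqxx; case: (m =P ord0) => [//|nm]; case: (m == j) => //=.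
Qed.

Lemma colvj (W : 'M[C]_4) j a : j != ord0 -> (W *m vj j) a ord0 = W a ord0 * q35 + W a j * q45.
Proof.
move=> nj; rewrite mxE (bigD1 ord0) //= (bigD1 j) //= big1 ?addr0 => [|m /andP[nm0 nmj]].
- by rewrite !vj_col0 eqxx (negbTE nj) eqxx.
- by rewrite vj_col0 (negbTE nm0) (negbTE nmj) mulr0.
Qed.

Lemma conjM (x y : C) : (x * y)^* = x^* * y^*.
Proof. exact: rmorphM. Qed.

Lemma conjMq45 x : (x * q45)^* = x^* * q45.
Proof. by rewrite conjM conj_q45. Qed.
Lemma conjMq35 x : (x * q35)^* = x^* * q35.
Proof. by rewrite conjM conj_q35. Qed.

Lemma q35_neq0 : q35 != 0.
Proof. by rewrite /q35 mulf_neq0 // ?invr_eq0 pnatr_eq0. Qed.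
Lemma q45_neq0 : q45 != 0.
Proof. by rewrite /q45 mulf_neq0 // ?invr_eq0 pnatr_eq0. Qed.

Lemma force_scalar (W : 'M[C]_4) : unitary W ->
  W *m E00 *m adj W = E00 ->
  (forall j : 'I_4, j != ord0 ->
     (W *m vj j) *m E00 *m adj (W *m vj j) = vj j *m E00 *m adj (vj j)) ->
  W = (W ord0 ord0)%:M.
Proof.
move=> uW h1 hv.
have uW' : adj W *m W = 1%:M := mulmx1C uW.
have h0 a b : W a ord0 * (W b ord0)^* = ((a == ord0) && (b == ord0))%:R.
  by have := congr1 (fun X : 'M[C]_4 => X a b) h1; rewrite /= rank1E mxE.
have c0 a : a != ord0 -> W a ord0 = 0.
  by move=> na; apply/eqP; rewrite -mul_conjC_eq0 h0 (negbTE na).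
have n0 : W ord0 ord0 * (W ord0 ord0)^* = 1 by rewrite h0 eqxx.
have w0nz : W ord0 ord0 != 0 by apply/eqP => e; move: n0; rewrite e mul0r => /eqP; rewrite eq_sym oner_eq0.
have cw0nz : (W ord0 ord0)^* != 0 by rewrite conjC_eq0.
have colj j : j != ord0 -> forall a, W a j = if a == j then W ord0 ord0 else 0.
  move=> nj.
  have hj a b : (W a ord0 * q35 + W a j * q45) * (W b ord0 * q35 + W b j * q45)^* =
      vj j a ord0 * (vj j b ord0)^*.
    have := congr1 (fun X : 'M[C]_4 => X a b) (hv j nj); rewrite /= !rank1E.
    by rewrite !colvj.
  have W0j : W ord0 j = 0.
    have := congr1 (fun X : 'M[C]_4 => X ord0 j) uW'; rewrite !mxE (bigD1 ord0) //= big1.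
    + rewrite !mxE addr0; case: (ord0 =P j) => [e|_]; first by move: nj; rewrite -e eqxx.
      by move/eqP; rewrite mulf_eq0 (negbTE cw0nz) /= => /eqP.
    + by move=> m nm; rewrite !mxE c0 // conjC0 mul0r.
  have Wjj : W j j = W ord0 ord0.
    have vj00 : vj j ord0 ord0 = q35 by rewrite vj_col0 eqxx.
    have vjj0 : vj j j ord0 = q45 by rewrite vj_col0 (negbTE nj) eqxx.
    have := hj ord0 j; rewrite vj00 vjj0 W0j (c0 j nj).
    rewrite !mul0r add0r addr0 conjMq45 conj_q45 => e.
    have e2 : (W ord0 ord0 * (W j j)^*) * (q35 * q45) = 1 * (q35 * q45).
      transitivity (W ord0 ord0 * q35 * ((W j j)^* * q45)); first by ring.
      by rewrite e mul1r.
    move/(mulIf (mulf_neq0 q35_neq0 q45_neq0)): e2; rewrite -n0 => /(mulfI w0nz) e3.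
    by rewrite -[W j j]conjCK e3 conjCK.
  move=> a; case: (a =P j) => [->|naj] //.
  case: (a =P ord0) => [->|na0] //.
  have vja : vj j a ord0 = 0.
    by rewrite vj_col0; case: (a =P ord0) => [/na0|_] //; case: (a =P j) => [/naj|_].
  have ca : W a ord0 = 0 by apply: c0; apply/eqP.
  have := hj a a; rewrite vja ca.
  rewrite !mul0r add0r => /eqP; rewrite mul_conjC_eq0 mulf_eq0 (negbTE q45_neq0) orbF.
  by move/eqP.
apply/matrixP => a b; rewrite mxE.
case: (b =P ord0) => [->|nb].
- case: (a =P ord0) => [->|na] /=; first by rewrite mulr1n.
  by rewrite c0 //; apply/eqP.
- have nb' : b != ord0 by apply/eqP.
  by rewrite (colj b nb'); case: (a == b) => //; rewrite mulr1n.
Qed.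

Definition j1 : 'I_4 := Ordinal (isT : (1 < 4)%N).

Lemma scalar_case (M : 'M[C]_4) (mu : C) : M = mu%:M ->
  exists W V : 'M[C]_4, unitary W /\ unitary V /\ W *m M *m adj W = M /\
    W *m (V *m E00 *m adj V) *m adj W <> V *m E00 *m adj V.
Proof.
move=> ->; exists (vj j1), 1%:M; split; first exact: vj_unitary.
split; first exact: unitary1.
split; first by rewrite mul_mx_scalar -scalemxAl (vj_unitary (j := j1)) // scalemx1.
rewrite mul1mx adj1 mulmx1 => e.
have := congr1 (fun X : 'M[C]_4 => X j1 j1) e; rewrite /= rank1E vj_col0 /= mxE /=.
rewrite conj_q45 => /eqP; by rewrite mulf_eq0 (negbTE q45_neq0).
Qed.

Lemma core (M : 'M[C]_4) : adj M = M ->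
  exists W V : 'M[C]_4, unitary W /\ unitary V /\ W *m M *m adj W = M /\
    W *m (V *m E00 *m adj V) *m adj W <> V *m E00 *m adj V.
Proof.
move=> hM; have [W [uW [cWM eWP]]] := cayley hM.
have WMW : W *m M *m adj W = M by rewrite cWM -mulmxA uW mulmx1.
case: (Classical_Prop.classic (exists V, (V = 1%:M \/ exists j, j != ord0 /\ V = vj j) /\
   W *m (V *m E00 *m adj V) *m adj W <> V *m E00 *m adj V)) => [[V [hV ne]]|nV].
  exists W, V; split; first by [].
  split; last by split.
  by case: hV => [->|[j [nj ->]]]; [exact: unitary1 | exact: vj_unitary].
have eq1 : W *m E00 *m adj W = E00.
  case: (W *m E00 *m adj W =P E00) => // ne; exfalso; apply: nV; exists 1%:M; split; first by left.
  by rewrite mul1mx adj1 mulmx1.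
have eqj j : j != ord0 -> (W *m vj j) *m E00 *m adj (W *m vj j) = vj j *m E00 *m adj (vj j).
  move=> nj; case: ((W *m vj j) *m E00 *m adj (W *m vj j) =P vj j *m E00 *m adj (vj j)) => // ne; exfalso; apply: nV; exists (vj j); split; first by right; exists j.
  by rewrite adjM !mulmxA in ne *.
have Ws := force_scalar uW eq1 eqj.
set w := W ord0 ord0 in Ws.
rewrite Ws mul_scalar_mx in eWP.
have ent a b : (w - 1) * M a b = - ('i *+ (a == b)) * (w + 1).
  have := congr1 (fun X : 'M[C]_4 => X a b) eWP; rewrite /= !mxE => e.
  rewrite mulNrn in e; move: e; set x := 'i *+ _ => e.
  apply/eqP; rewrite -subr_eq0; apply/eqP.
  transitivity (w * (M a b + x) - (M a b - x)); first by ring.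
  by rewrite e subrr.
case: (w =P 1) => [w1|nw1].
  have := ent ord0 ord0; rewrite w1 subrr mul0r eqxx mulr1n => /eqP.
  rewrite eq_sym mulNr oppr_eq0 mulf_eq0 (negbTE (neq0Ci C)) /= -mulr2n.
  by rewrite pnatr_eq0.
apply: (scalar_case (mu := M ord0 ord0)); apply/matrixP => a b; rewrite mxE.
have w1nz : w - 1 != 0 by rewrite subr_eq0; apply/eqP.
apply: (mulfI w1nz); rewrite ent.
case: (a =P b) => [_|nab].
  by rewrite !mulr1n (ent ord0 ord0) eqxx mulr1n.
by rewrite !mulr0n oppr0 mul0r mulr0.
Qed.

Lemma final l l1 l2 K b : l != l1 -> l != l2 -> l1 != l2 ->
  Prec l1 l2 (extend (Theta l1 l2) [:: l] [:: Bit]) K ->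
  (forall U V, unitary U -> unitary V -> forall f,
     supported (extend (Theta l1 l2) [:: l] [:: Bit]) f -> forall c p k,
     sem (fill K (UGate U l1 l2) (UGate V l1 l2)) f c p k =
     sem (UGate V l1 l2) (sem (UGate U l1 l2) (fun c p k => f (upd c l b) p k)) c p k +
     sem (UGate U l1 l2) (sem (UGate V l1 l2) (fun c p k => f (upd c l (~~ b)) p k)) c p k) ->
  False.
Proof.
move=> n1 n2 n12 P H.
pose f : st := fun c p k => if c l == b then 0 else stm l1 l2 E00 c p k.
have sf : supported (extend (Theta l1 l2) [:: l] [:: Bit]) f.
  move=> c c' p p' k k' hc hq; rewrite /f.
  have -> : c l = c' l by apply: hc; rewrite extend1 eqxx.
  have q1 : p l1 = p' l1 /\ k l1 = k' l1.
    by apply: hq; rewrite extend1 eq_sym (negbTE n1) ThetaE eqxx.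
  have q2 : p l2 = p' l2 /\ k l2 = k' l2.
    by apply: hq; rewrite extend1 eq_sym (negbTE n2) ThetaE eqxx orbT.
  by rewrite /stm /ix (proj1 q1) (proj2 q1) (proj1 q2) (proj2 q2).
have hf : herm f.
  move=> c p k; rewrite /f; case: (c l == b); first by rewrite conjC0.
  by rewrite /stm !mxE conjC_nat andbC.
have fb : (fun c p k => f (upd c l b) p k) = stm l1 l2 0.
  apply: functional_extensionality => c; apply: functional_extensionality => p;
  apply: functional_extensionality => k.
  by rewrite /f upd_eq eqxx /stm mxE.
have fnb : (fun c p k => f (upd c l (~~ b)) p k) = stm l1 l2 E00.
  apply: functional_extensionality => c; apply: functional_extensionality => p;
  apply: functional_extensionality => k.
  have nb : (~~ b == b) = false by case: (b).
  by rewrite /f upd_eq nb.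
have R U V : (fun c p k =>
     sem (UGate V l1 l2) (sem (UGate U l1 l2) (fun c p k => f (upd c l b) p k)) c p k +
     sem (UGate U l1 l2) (sem (UGate V l1 l2) (fun c p k => f (upd c l (~~ b)) p k)) c p k)
     = stm l1 l2 (U *m (V *m E00 *m adj V) *m adj U).
  rewrite fb fnb !app2_stm // mulmx0 mul0mx mulmx0 mul0mx.
  apply: functional_extensionality => c; apply: functional_extensionality => p;
  apply: functional_extensionality => k.
  by rewrite {1}/stm mxE add0r.
have [s [ss [hs E]]] := P f sf hf.
have eS := stm_supp n12 ss.
have aM := herm_adj l1 l2 hs; simpl in aM.
move: eS aM; set Ms := \matrix_(i, j) _ => eS aM.
have [W [V [uW [uV [WMW neq]]]]] := core aM.
have e1 : sem (UGate 1%:M l1 l2) s = sem (UGate W l1 l2) s.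
  by rewrite eS !app2_stm // mul1mx adj1 mulmx1 WMW.
have eK := E _ _ e1 V.
have e2 : stm l1 l2 (1%:M *m (V *m E00 *m adj V) *m adj 1%:M) =
          stm l1 l2 (W *m (V *m E00 *m adj V) *m adj W).
  rewrite -(R W V) -(R 1%:M V).
  apply: functional_extensionality => c; apply: functional_extensionality => p;
  apply: functional_extensionality => k.
  rewrite -!H //; [exact: (congr1 (fun g : st => g c p k) eK) | exact: unitary1].
rewrite mul1mx adj1 mulmx1 in e2.
by apply: neq; apply: (stm_inj n12); rewrite e2.
Qed.

Theorem mainTheorem2 (l l1 l2 : nat) (K : circ) :
  uniq [:: l; l1; l2] ->
  typed l1 l2 (extend (Theta l1 l2) [:: l] [:: Bit]) K (Theta l1 l2) ->
  approx l1 l2 (extend (Theta l1 l2) [:: l] [:: Bit]) K (Dswitch l) ->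
  (1 < count1 K)%N \/ (1 < count2 K)%N.
Proof.
rewrite /= !inE negb_or => /and3P[/andP[n1 n2] n12 _] ty ap.
case: (ltnP 1 (count1 K)) => [|c1]; first by left.
case: (ltnP 1 (count2 K)) => [|c2]; first by right.
exfalso; have [P|P] := LemC ty c1 c2.
- apply: (final (b := true) n1 n2 n12 P) => U V uU uV f hf c p k.
  exact: (ap U V uU uV f hf c p k).
- apply: (final (b := false) n1 n2 n12 P) => U V uU uV f hf c p k.
  rewrite fill_swap (ap V U uV uU f hf c p k) /= addrC.
  by [].
Qed.
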